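(* Let $M,N$ be equivalent canonical dtlas such that $M$ is a dtpla with $P_M=\{\hat p_1,\dots,\hat p_n\}$ and $N$ is a dtop. Let $\varphi$ be the aheadness mapping from $N$ to $M$ and define $\psi(q)=(\varphi(q,\hat p_1),\dots,\varphi(q,\hat p_n))$ for $q\in Q_N$. Then $\psi$ is a bijection between $Q_N$ and $\mathrm{diftup}(M)$.
   Context: Trees and patterns. $T_\Delta(Z)$ is the set of trees over ranked alphabet $\Delta$ with extra nullary symbols $Z$; $t/v$ is the subtree at node $v\in\mathbb N_+^*$; $\bot$ is a special nullary symbol; $V_\bot(t)$ is the set of nodes of $t$ labelled $\bot$. For trees, $t\sqsubseteq t'$ means $t'$ is obtained from $t$ by replacing some occurrences of $\bot$ by trees; $\sqcap T$ is the greatest lower bound of a finite nonempty set $T$ of trees (largest common prefix with $\bot$ at the highest nodes of disagreement). A $\Sigma$-context is $C\in T_\Sigma(\{\bot\})$ with exactly one occurrence of $\bot$; $\mathcal C_\Sigma$ is their set; $C[t]$ replaces $\bot$ by $t$. Dtlas. A dtla $M$ from $\Sigma$ to $\Delta$ consists of a finite set $Q_M$ of states, a total deterministic bottom-up tree automaton with finite state set $P_M$ and transitions $\delta(a,p_1,\dots,p_k)$, extended to $\delta_M:T_\Sigma\to P_M$ ($[\![p]\!]_M=\delta_M^{-1}(p)$), axioms $A_M(p)\in T_\Delta(Q_M(\{x_0\}))$, and at most one rule $q(a(x_1\langle p_1\rangle,\dots,x_k\langle p_k\rangle))\to\mathrm{rhs}_M(q,a,p_1,\dots,p_k)\in T_\Delta(Q_M(X_k))$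 per $q,a,p_1,\dots,p_k$. Semantics: $q_M(a(s_1,\dots,s_k))=\mathrm{rhs}_M(q,a,\delta_M(s_1),\dots,\delta_M(s_k))[q'(x_i)\leftarrow q'_M(s_i)]$, $M(s)=A_M(\delta_M(s))[q(x_0)\leftarrow q_M(s)]$; two dtlas are equivalent if $[\![M]\!]=[\![N]\!]$. Total: $[\![M]\!]$ total. A dtop is a dtla with a single look-ahead state $\bot$. A dtpla is a dtla with $|P_M|\ge2$. $M(C[p])\in T_\Delta(Q_M\times P_M)$ is the output on $C\in\mathcal C_\Sigma$ with the hole treated as a leaf of look-ahead state $p$ and $q_M(p)=\langle q,p\rangle$; for a dtop $N$, $N(C)=N(C[\bot])$. A state $q$ is reachable if $\langle q,p\rangle$ labels a node of $M(C[p])$ for some $C,p$. $M$ is la-uniform if there is $\rho_M:Q_M\to P_M$ with domain of $[\![q]\!]_M$ equal to $[\![\rho_M(q)]\!]_M$, every $q(x_0)$ in $A_M(p)$ having $\rho_M(q)=p$, every $q'(x_i)$ in $\mathrm{rhs}_M(q,a,p_1,\dots,p_k)$ having $\rho_M(q')=p_i$, and the rule for $q,a,p_1,\dots,p_k$ existing iff $\delta(a,p_1,\dots,p_k)=\rho_M(q)$. Earliest: no state $q$ and $d\in\Delta$ such that $q(s)$ has root label $d$ for all $s$ in the domain of $[\![q]\!]$. Canonical: total, la-uniform, earliest, all states reachable, and distinct states have distinct translations. $\mathrm{pref}(M,C)=\sqcap\{M(C[\hat p_1]),\dots,M(C[\hat p_n])\}$ and $\mathrm{diftup}(M)=\{(M(C[\hat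 p_1])/v,\dots,M(C[\hat p_n])/v)\mid C\in\mathcal C_\Sigma,\ v\in V_\bot(\mathrm{pref}(M,C))\}$. Aheadness mapping: the unique $\varphi:Q_N\times P_M\to T_\Delta(Q_M\times P_M)$ with $M(C[p])=N(C)[\langle q,\bot\rangle\leftarrow\varphi(q,p)\mid q\in Q_N]$ for all $C\in\mathcal C_\Sigma$, $p\in P_M$. *)

(* Defs.v *)
From mathcomp Require Import all_boot.
Set Implicit Arguments. Unset Strict Implicit. Unset Printing Implicit Defensive.

(* Trees.  [tree F L]: internal nodes labelled by symbols of F, leaves *)
(* labelled by the extra nullary symbols L.  T_F(L) = well-ranked ones. *)
(* Nodes are addressed by sequences of 0-based child indices.          *)
Inductive tree (F L : Type) : Type :=
| Leaf of L
| Node of F & seq (tree F L).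
Arguments Leaf {F L}.
Arguments Node {F L}.

Record ralph := RAlph { sym :> finType; rank : sym -> nat }.

Section Trees.
Variables (F : Type).

Fixpoint wr (ar : F -> nat) L (t : tree F L) : bool :=
  match t with
  | Leaf _ => true
  | Node a ts => (size ts == ar a) && all (@wr ar L) ts
  end.

Fixpoint leaves L (t : tree F L) : seq L :=
  match t with
  | Leaf l => [:: l]
  | Node _ ts => flatten (map (@leaves L) ts)
  end.

Fixpoint tbind L L' (f : L -> tree F L') (t : tree F L) : tree F L' :=
  match t with
  | Leaf l => f l
  | Node a ts => Node a (map (tbind f) ts)
  end.

Definition tmapl L L' (f : L -> L') (t : tree F L) : tree F L' :=
  tbind (fun l => Leaf (f l)) t.

Fixpoint optseq A (s : seq (option A)) : option (seq A) :=
  match s with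
  | [::] => Some [::]
  | o :: s' => match o, optseq s' with
               | Some x, Some xs => Some (x :: xs)
               | _, _ => None
               end
  end.

Fixpoint tbindo L L' (f : L -> option (tree F L')) (t : tree F L)
  : option (tree F L') :=
  match t with
  | Leaf l => f l
  | Node a ts => omap (Node a) (optseq (map (tbindo f) ts))
  end.

Fixpoint subtree L (t : tree F L) (v : seq nat) : option (tree F L) :=
  match v with
  | [::] => Some t
  | i :: v' => match t with
               | Leaf _ => None
               | Node _ ts => match onth ts i with
                              | Some t' => subtree t' v'
                              | None => None
                              end
               end
  end.

Definition root_is L (d : F) (t : tree F L) : Prop :=
  match t with Node d' _ => d' = d | Leaf _ => False end.
End Trees.

(* greatest lower bound; the special symbol bot is [Leaf None] *)
Section Glb.
Variables (F L : eqType).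

Fixpoint meet (t u : tree F (option L)) {struct t} : tree F (option L) :=
  match t, u with
  | Leaf x, Leaf y => if x == y then Leaf x else Leaf None
  | Node a ts, Node b us =>
      if (a == b) && (size ts == size us) then
        Node a ((fix zm (ts us : seq (tree F (option L))) :=
                  match ts, us with
                  | t1 :: ts', u1 :: us' => meet t1 u1 :: zm ts' us'
                  | _, _ => [::]
                  end) ts us)
      else Leaf None
  | _, _ => Leaf None
  end.

Definition lift_bot (t : tree F L) : tree F (option L) := tmapl (@Some L) t.

Definition glb (ts : seq (tree F L)) : tree F (option L) :=
  match ts with
  | [::] => Leaf None
  | t :: ts' => foldr (fun u acc => meet (lift_bot u) acc) (lift_bot t) ts'
  end.

Definition is_bot_node (t : tree F (option L)) (v : seq nat) : Prop :=
  subtree t v = Some (Leaf None).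
End Glb.

(* - [ax p] = A_M(p) : leaves q stand for q(x0);                        *)
(* - [rhs q a ps] = rhs_M(q,a,p1..pk) (None = no rule); a leaf (q',i)   *)
(*   stands for q'(x_{i+1}) (0-based child index).                      *)
Record dtla (S D : ralph) := Dtla {
  Q : finType;
  P : finType;
  trans : S -> seq P -> P;
  ax : P -> tree D Q;
  rhs : Q -> S -> seq P -> option (tree D (Q * nat))
}.
Arguments Q {S D}.
Arguments P {S D}.
Arguments trans {S D} d _ _.
Arguments ax {S D} d _.
Arguments rhs {S D} d _ _ _.

Section Dtla.
Variables (S D : ralph) (M : dtla S D).

Definition wf_dtla : Prop :=
  (forall p, wr (@rank D) (ax M p)) /\
  (forall q a ps r, rhs M q a ps = Some r ->
     [/\ size ps = rank a, wr (@rank D) r &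
         forall q' i, (q', i) \in leaves r -> i < rank a]).

Section Run.
(* input trees with leaves L, each leaf l being a hole of look-ahead state lav l *)
Variables (L : Type) (lav : L -> P M).

Fixpoint delta (t : tree S L) : P M :=
  match t with
  | Leaf l => lav l
  | Node a ts => trans M a (map delta ts)
  end.

(* qsem t q = q_M(t); on a hole leaf l, q_M(l) = <q, l> *)
Fixpoint qsem (t : tree S L) : Q M -> option (tree D (Q M * L)) :=
  match t with
  | Leaf l => fun q => Some (Leaf (q, l))
  | Node a ts => fun q =>
      let fs := map qsem ts in
      match rhs M q a (map delta ts) with
      | None => None
      | Some r => tbindo (fun x : Q M * nat => nth (fun _ => None) fs x.2 x.1) r
      end
  end.

Definition out (t : tree S L) : option (tree D (Q M * L)) :=
  tbindo (fun q => qsem t q) (ax M (delta t)).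
End Run.

Definition ground := tree S void.
Definition no_lav (v : void) : P M := of_void _ v.
Definition forget (t : tree D (Q M * void)) : tree D void :=
  tbind (fun x => Leaf x.2) t.

Definition qtrans (q : Q M) (s : ground) : option (tree D void) :=
  omap forget (qsem no_lav s q).
Definition transl (s : ground) : option (tree D void) :=
  omap forget (out no_lav s).

Definition context (C : tree S unit) : Prop :=
  wr (@rank S) C /\ size (leaves C) = 1%N.

Definition out_ctx (C : tree S unit) (p : P M) : option (tree D (Q M * P M)) :=
  out id (tmapl (fun _ => p) C).

Definition total : Prop :=
  forall s : ground, wr (@rank S) s -> transl s <> None.

Definition la_uniform : Prop :=
  exists rho : Q M -> P M,
    [/\ (forall q (s : ground), wr (@rank S) s ->
           (qtrans q s <> None <-> delta no_lav s = rho q)),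
        (forall p q, q \in leaves (ax M p) -> rho q = p),
        (forall q a ps r, rhs M q a ps = Some r ->
           forall q' i, (q', i) \in leaves r -> onth ps i = Some (rho q')) &
        (forall q a ps, size ps = rank a ->
           (rhs M q a ps <> None <-> trans M a ps = rho q))].

Definition earliest : Prop :=
  ~ exists (q : Q M) (d : D),
      forall s : ground, wr (@rank S) s -> forall t, qtrans q s = Some t ->
        root_is d t.

Definition reachable (q : Q M) : Prop :=
  exists C p t, context C /\ out_ctx C p = Some t /\ (q, p) \in leaves t.

Definition canonical : Prop :=
  [/\ total, la_uniform, earliest,
      (forall q, reachable q) &
      (forall q q', q <> q' ->
         ~ (forall s : ground, wr (@rank S) s -> qtrans q s = qtrans q' s))].

Definition is_dtpla : Prop := 2 <= #|P M|.
Definition is_dtop : Prop := #|P M| = 1%N.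

(* pref(M,C) computed from the family (M(C[p]))_p *)
Definition pref (ts : P M -> tree D (Q M * P M)) : tree D (option (Q M * P M)) :=
  glb (map ts (enum (P M))).

Definition diftup (T : {ffun P M -> tree D (Q M * P M)}) : Prop :=
  exists C (ts : P M -> tree D (Q M * P M)) (v : seq nat),
    [/\ context C,
        (forall p, out_ctx C p = Some (ts p)),
        is_bot_node (pref ts) v &
        (forall p, subtree (ts p) v = Some (T p))].
End Dtla.
Arguments wf_dtla {S D} M.
Arguments delta {S D} M {L} lav t.
Arguments qsem {S D} M {L} lav t q.
Arguments out {S D} M {L} lav t.
Arguments ground S : clear implicits.
Arguments qtrans {S D} M q s.
Arguments transl {S D} M s.
Arguments context S C : clear implicits.
Arguments out_ctx {S D} M C p.
Arguments total {S D} M.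
Arguments la_uniform {S D} M.
Arguments earliest {S D} M.
Arguments reachable {S D} M q.
Arguments canonical {S D} M.
Arguments is_dtpla {S D} M.
Arguments is_dtop {S D} M.
Arguments pref {S D} M ts.
Arguments diftup {S D} M T.

Definition equivalent (S D : ralph) (M N : dtla S D) : Prop :=
  forall s : ground S, wr (@rank S) s -> transl M s = transl N s.

(* aheadness mapping from the dtop N to M; the hole of N gets N's unique
   look-ahead state pN (bot) *)
Definition aheadness (S D : ralph) (M N : dtla S D)
  (phi : Q N -> P M -> tree D (Q M * P M)) : Prop :=
  forall C, context S C -> forall (p : P M) (pN : P N),
    out_ctx M C p = omap (tbind (fun x : Q N * P N => phi x.1 p)) (out_ctx N C pN).
Arguments equivalent {S D} M N.
Arguments aheadness {S D} M N phi.

(* Main.v *)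
Require Import Defs.
From mathcomp Require Import all_boot.
From Stdlib Require List.
Set Implicit Arguments. Unset Strict Implicit. Unset Printing Implicit Defensive.

Definition tree_ind2 (F L : Type) (Pr : tree F L -> Prop)
  (HL : forall l, Pr (Leaf l))
  (HN : forall a ts, (forall t, List.In t ts -> Pr t) -> Pr (Node a ts)) :
  forall t, Pr t :=
  fix IH t := match t with
  | Leaf l => HL l
  | Node a ts => HN a ts ((fix G ts : forall t, List.In t ts -> Pr t :=
       match ts with
       | nil => fun t H => False_ind _ H
       | cons t0 ts' => fun t H => match H with
           | or_introl E => eq_ind t0 Pr (IH t0) t E
           | or_intror H' => G ts' t H' end end) ts) end.

Lemma onth_In T (s : seq T) i x : onth s i = Some x -> List.In x s.
Proof. elim: s i => [|y s IH] [|i] //=; [by case=> ->; left | by move/IH; right]. Qed.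

Lemma map_ext_In A B (f g : A -> B) s : (forall x, List.In x s -> f x = g x) -> map f s = map g s.
Proof. elim: s => //= x s IH H; rewrite H ?IH //; [by move=> y Hy; apply: H; right | by left]. Qed.

Lemma tbind_assoc F L1 L2 L3 (f : L1 -> tree F L2) (g : L2 -> tree F L3) t :
  tbind g (tbind f t) = tbind (fun x => tbind g (f x)) t.
Proof.
elim/tree_ind2: t => //= a ts IH; congr Node; rewrite -map_comp; exact: map_ext_In.
Qed.

Lemma tbindo_tbind F L1 L2 L3 (f : L1 -> tree F L2) (g : L2 -> option (tree F L3)) t :
  tbindo g (tbind f t) = tbindo (fun x => tbindo g (f x)) t.
Proof.
elim/tree_ind2: t => //= a ts IH; rewrite -map_comp; congr omap; congr optseq; exact: map_ext_In.
Qed.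

Lemma optseq_obind A B (h : A -> option B) (o : A -> option A) (s : seq A) : True.
Proof. by []. Qed.

Lemma optseq_map_obind A B C (o : A -> option B) (h : B -> option C) (s : seq A) :
  optseq (map (fun r => obind h (o r)) s) = obind (fun xs => optseq (map h xs)) (optseq (map o s)).
Proof.
elim: s => //= x s IH; rewrite IH; case: (o x) => [b|] /=; last by case: (optseq (map o s)).
case: (optseq (map o s)) => [xs|] /=; last by case: (h b).
by case: (h b).
Qed.

Lemma tbindo_assoc F L1 L2 L3 (f : L1 -> option (tree F L2)) (g : L2 -> option (tree F L3)) t :
  tbindo (fun x => obind (tbindo g) (f x)) t = obind (tbindo g) (tbindo f t).
Proof.
elim/tree_ind2: t => //= a ts IH.
rewrite (map_ext_In (g := fun r => obind (tbindo g) (tbindo f r))) //.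
rewrite optseq_map_obind; by case: (optseq (map (tbindo f) ts)).
Qed.

Lemma wr_tbind F (ar : F -> nat) L1 L2 (f : L1 -> tree F L2) t :
  wr ar t -> (forall l, wr ar (f l)) -> wr ar (tbind f t).
Proof.
move=> + Hf; elim/tree_ind2: t => //= a ts IH /andP[Hs Ha].
rewrite size_map Hs /=; elim: ts IH Ha {Hs} => //= t ts IHts IH /andP[H1 H2].
rewrite IH ?IHts //; [by move=> y Hy; apply: IH; right | by left].
Qed.

Lemma optseq_onth A B (f : A -> option B) s s' i y :
  optseq (map f s) = Some s' -> onth s i = Some y -> exists z, f y = Some z /\ onth s' i = Some z.
Proof.
elim: s s' i => [|x s IH] s' i /=; first by case: i.
case E: (f x) => [b|] //; case E2: (optseq (map f s)) => [xs|] //.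
case=> <-; case: i => [|i] /=; first by case=> <-; exists b; split.
exact: IH E2.
Qed.

Lemma optseq_onth' A B (f : A -> option B) s s' i z :
  optseq (map f s) = Some s' -> onth s' i = Some z -> exists y, onth s i = Some y /\ f y = Some z.
Proof.
elim: s s' i => [|x s IH] s' i /=; first by case=> <-; case: i.
case E: (f x) => [b|] //; case E2: (optseq (map f s)) => [xs|] //.
case=> <-; case: i => [|i] /=; first by case=> <-; exists x; split.
exact: IH E2.
Qed.

Lemma subtree_tbind_leaf F L1 L2 (h : L1 -> tree F L2) n u x w :
  subtree n u = Some (Leaf x) -> subtree (tbind h n) (u ++ w) = subtree (h x) w.
Proof.
elim: u n => [|i u IH] [l|a ns] //=; first by case=> ->.
rewrite onth_map; case E: (onth ns i) => [n'|] //=; exact: IH.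
Qed.

Lemma subtree_tbind_inv F L1 L2 (h : L1 -> tree F L2) n v y :
  subtree (tbind h n) v = Some (Leaf y) ->
  exists u w x, [/\ v = u ++ w, subtree n u = Some (Leaf x) & subtree (h x) w = Some (Leaf y)].
Proof.
elim: v n => [|i v IH] [l|a ns] //=.
- by move=> H; exists [::], [::], l.
- by move=> H; exists [::], (i :: v), l.
- rewrite onth_map; case E: (onth ns i) => [n'|] //= /IH [u [w [x [-> H1 H2]]]].
  by exists (i :: u), w, x; rewrite /= E.
Qed.

Lemma tbindo_subtree F L1 L2 (g : L1 -> option (tree F L2)) n t u x :
  tbindo g n = Some t -> subtree n u = Some (Leaf x) ->
  exists t', g x = Some t' /\ subtree t u = Some t'.
Proof.
elim: u n t => [|i u IH] [l|a ns] t //=; first by move=> H [<-]; exists t.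
case E: (optseq (map (tbindo g) ns)) => [ts|] //= [<-] /=.
case E2: (onth ns i) => [n'|] //= H.
have [z [Hz ->]] := optseq_onth E E2.
exact: IH Hz H.
Qed.

Lemma subtree_tbind_leafmap F L1 L2 (h : L1 -> tree F L2) t u :
  (forall l, exists l', h l = Leaf l') ->
  subtree (tbind h t) u = omap (tbind h) (subtree t u).
Proof.
move=> Hh; elim: u t => [|i u IH] [l|a ns] //=.
- by have [l' ->] := Hh l.
- by rewrite onth_map; case: (onth ns i).
Qed.
Lemma leaves_onth F (L : eqType) (ns : seq (tree F L)) i n0 x :
  onth ns i = Some n0 -> x \in leaves n0 -> x \in flatten (map (@leaves F L) ns).
Proof.
elim: ns i => [|m ns IH] [|i] //= => [[->]|H] Hx; rewrite mem_cat ?Hx //.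
by rewrite (IH _ H Hx) orbT.
Qed.

Lemma leaves_inv F (L : eqType) (ns : seq (tree F L)) x :
  x \in flatten (map (@leaves F L) ns) -> exists i n0, onth ns i = Some n0 /\ x \in leaves n0.
Proof.
elim: ns => [|m ns IH] //=; rewrite mem_cat => /orP[H|/IH [i [n0 [H1 H2]]]].
- by exists 0, m.
- by exists i.+1, n0.
Qed.

Lemma leaves_pos F (L : eqType) (t : tree F L) x :
  x \in leaves t -> exists u, subtree t u = Some (Leaf x).
Proof.
elim/tree_ind2: t => [l|a ns IH] /=.
- by rewrite inE => /eqP ->; exists [::].
- move=> /leaves_inv [i [n0 [H1 H2]]].
  have [u Hu] := IH _ (onth_In H1) H2.
  by exists (i :: u); rewrite /= H1.
Qed.

Lemma leaves_tbindo F (L1 L2 : eqType) (f : L1 -> option (tree F L2)) r t y :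
  tbindo f r = Some t -> y \in leaves t ->
  exists x, x \in leaves r /\ exists t', f x = Some t' /\ y \in leaves t'.
Proof.
elim/tree_ind2: r t => [l|a ns IH] t /=.
- by move=> H Hy; exists l; split; [rewrite inE | exists t].
- case E: (optseq (map (tbindo f) ns)) => [ts|] //= [<-] /= /leaves_inv [i [t0 [H1 H2]]].
  have [n0 [Hn0 Ht0]] := optseq_onth' E H1.
  have [x [Hx Hx']] := IH _ (onth_In Hn0) _ Ht0 H2.
  by exists x; split => //; exact: leaves_onth Hn0 Hx.
Qed.

Lemma leaves_tbind_sub F (L1 L2 : eqType) (h : L1 -> tree F L2) n x y :
  x \in leaves n -> y \in leaves (h x) -> y \in leaves (tbind h n).
Proof.
elim/tree_ind2: n => [l|a ns IH] /=; first by rewrite inE => /eqP ->.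
move=> /leaves_inv [i [n0 [H1 H2]]] Hy.
apply: (@leaves_onth _ _ _ i (tbind h n0)); first by rewrite onth_map H1.
exact: IH (onth_In H1) H2 Hy.
Qed.

Lemma leaves_tmapl_const F L1 (L2 : eqType) (p : L2) (C : tree F L1) z :
  z \in leaves (tmapl (fun _ => p) C) -> z = p.
Proof.
rewrite /tmapl; elim/tree_ind2: C => [l|a ns IH] /=; first by rewrite inE => /eqP.
move=> /leaves_inv [i [n0 [H1 H2]]]; move: H1; rewrite onth_map.
case E: (onth ns i) => [m|] //= [Em]; subst n0; exact: IH (onth_In E) H2.
Qed.

Lemma nth_map_opt A B C (g : A -> B -> option C) ts i q z :
  nth (fun _ => None) (map g ts) i q = Some z -> exists t0, onth ts i = Some t0 /\ g t0 q = Some z.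
Proof.
elim: ts i => [|t ts IH] [|i] //=; first by exists t.
exact: IH.
Qed.
Lemma meet_tbind (F L : eqType) L1 (f g : L1 -> tree F (option L)) n :
  meet (tbind f n) (tbind g n) = tbind (fun x => meet (f x) (g x)) n.
Proof.
elim/tree_ind2: n => [l|a ns IH] //=.
rewrite eqxx !size_map eqxx /=; congr Node.
elim: ns IH => //= m ns IHns IH; rewrite IH; last by left.
by rewrite IHns // => y Hy; apply: IH; right.
Qed.

Lemma lift_tbind (F L : eqType) L1 (h : L1 -> tree F L) n :
  lift_bot (tbind h n) = tbind (fun x => lift_bot (h x)) n.
Proof. by rewrite /lift_bot /tmapl tbind_assoc. Qed.

Lemma glb_tbind (F L : eqType) L1 A (f : A -> L1 -> tree F L) n p0 ps :
  glb (map (fun p => tbind (f p) n) (p0 :: ps)) =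
  tbind (fun x => glb (map (fun p => f p x) (p0 :: ps))) n.
Proof.
rewrite /=; elim: ps => [|p ps IH] /=; first exact: lift_tbind.
by rewrite IH lift_tbind meet_tbind.
Qed.

Definition hdeq (F L : Type) (a b : tree F L) : Prop :=
  match a, b with
  | Leaf x, Leaf y => x = y
  | Node c _, Node d _ => c = d
  | _, _ => False
  end.

Lemma hdeq_refl F L (a : tree F L) : hdeq a a.
Proof. by case: a. Qed.

Lemma hdeq_trans F L (a b c : tree F L) : hdeq a b -> hdeq b c -> hdeq a c.
Proof. by case: a; case: b; case: c => //= *; subst. Qed.

Lemma meet_hd (F L : eqType) (a b : tree F (option L)) :
  meet a b <> Leaf None -> hdeq a (meet a b) /\ hdeq b (meet a b).
Proof.
case: a => [x|c ts]; case: b => [y|d us] //=.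
- by case: eqP => [<-|]. 
- case: andP => [[/eqP <- _]|] //=.
Qed.

Lemma glb_hd (F L : eqType) (t : tree F L) ts :
  glb (t :: ts) <> Leaf None ->
  forall u, List.In u (t :: ts) -> hdeq (lift_bot u) (glb (t :: ts)).
Proof.
rewrite /=; elim: ts => [|v ts IH] /=.
- by move=> _ u [<-|//]; exact: hdeq_refl.
- move=> H; have [H1 H2] := meet_hd H.
  have H3 : foldr (fun u acc => meet (lift_bot u) acc) (lift_bot t) ts <> Leaf None.
    move=> E; apply: H; rewrite E; case: (lift_bot v) => [y|c cs] //=; by case: eqP => [->|].
  move=> u [<-|[<-|Hu]] //.
  + apply: hdeq_trans H2; exact: IH H3 _ (or_introl erefl).
  + apply: hdeq_trans H2; exact: IH H3 _ (or_intror Hu).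
Qed.
Lemma tbindo_ext F L1 L2 (f g : L1 -> option (tree F L2)) r :
  (forall x, f x = g x) -> tbindo f r = tbindo g r.
Proof.
move=> H; elim/tree_ind2: r => //= a ts IH; congr omap; congr optseq; exact: map_ext_In.
Qed.

Lemma delta_comp (S D : ralph) (K : dtla S D) (C : tree S unit) (s : ground S) :
  delta K (no_lav K) (tbind (fun _ => s) C) = delta K id (tmapl (fun _ => delta K (no_lav K) s) C).
Proof.
elim/tree_ind2: C => //= a cs IH; congr (trans K a); rewrite -!map_comp; exact: map_ext_In.
Qed.

Lemma qsem_comp (S D : ralph) (K : dtla S D) (C : tree S unit) (s : ground S) q :
  qsem K (no_lav K) (tbind (fun _ => s) C) q =
  obind (tbindo (fun x : Q K * P K => qsem K (no_lav K) s x.1))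
        (qsem K id (tmapl (fun _ => delta K (no_lav K) s) C) q).
Proof.
elim/tree_ind2: C q => //= a cs IH q.
have -> : map (delta K (no_lav K)) (map (tbind (fun=> s)) cs) =
          map (delta K id) (map (tbind (fun l => Leaf (delta K (no_lav K) s))) cs).
  rewrite -!map_comp; apply: map_ext_In => c _ /=; exact: delta_comp.
case: (rhs K q a _) => [r|] //=.
rewrite -tbindo_assoc; apply: tbindo_ext => -[q' i] /=.
elim: cs i IH {r} => [|c cs IHcs] [|i] IH //=.
- by rewrite IH //; left.
- by apply: IHcs => y Hy; apply: IH; right.
Qed.
Lemma out_comp (S D : ralph) (K : dtla S D) (C : tree S unit) (s : ground S) :
  out K (no_lav K) (tbind (fun _ => s) C) =
  obind (tbindo (fun x : Q K * P K => qsem K (no_lav K) s x.1))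
        (out_ctx K C (delta K (no_lav K) s)).
Proof.
rewrite /out_ctx /out delta_comp -tbindo_assoc; apply: tbindo_ext => q.
exact: qsem_comp.
Qed.

Lemma qsem_leaves (S D : ralph) (K : dtla S D) (L : eqType) (lav : L -> P K) t q r y :
  qsem K lav t q = Some r -> y \in leaves r -> y.2 \in leaves t.
Proof.
elim/tree_ind2: t q r => [l|a cs IH] q r /=.
- by case=> <- /=; rewrite !mem_seq1 => /eqP ->.
- case: (rhs K q a _) => [r0|] // H Hy.
  have [x [Hx [t' [Ht' Hy']]]] := leaves_tbindo H Hy.
  have [c [Hc Hc']] := nth_map_opt Ht'.
  exact: leaves_onth Hc (IH _ (onth_In Hc) _ _ Hc' Hy').
Qed.

Lemma out_ctx_leaves (S D : ralph) (K : dtla S D) C p t y :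
  out_ctx K C p = Some t -> y \in leaves t -> y.2 = p.
Proof.
rewrite /out_ctx /out => H Hy.
have [x [_ [t' [Ht' Hy']]]] := leaves_tbindo H Hy.
exact: leaves_tmapl_const (qsem_leaves Ht' Hy').
Qed.
Lemma mem_In (T : eqType) (x : T) s : x \in s -> List.In x s.
Proof. elim: s => //= y s IH; rewrite inE => /orP[/eqP ->|/IH]; by [left|right]. Qed.

Lemma keyK (S D : ralph) (M N : dtla S D) (phi : Q N -> P M -> tree D (Q M * P M)) :
  equivalent M N -> Defs.total M -> aheadness M N phi -> is_dtop N ->
  forall C pN n u q, context S C -> out_ctx N C pN = Some n ->
  subtree n u = Some (Leaf (q, pN)) ->
  forall s : ground S, wr (@rank S) s ->
  exists aM, tbindo (fun x => qsem M (no_lav M) s x.1) (phi q (delta M (no_lav M) s)) = Some aM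
          /\ qtrans N q s = Some (forget aM).
Proof.
move=> Heq Htot Hah HN C pN n u q HC Hn Hu s Hs.
have HCs : wr (@rank S) (tbind (fun _ => s) C) by apply: wr_tbind HC.1 _.
have /fintype_le1P H1 : #|P N| <= 1 by rewrite HN.
have HdN : delta N (no_lav N) s = pN by apply: H1.
have EM : out M (no_lav M) (tbind (fun _ => s) C) =
   tbindo (fun x => tbindo (fun x => qsem M (no_lav M) s x.1) (phi x.1 (delta M (no_lav M) s))) n.
  by rewrite out_comp (Hah C HC _ pN) Hn /= tbindo_tbind.
have EN : out N (no_lav N) (tbind (fun _ => s) C) =
   tbindo (fun x => qsem N (no_lav N) s x.1) n.
  by rewrite out_comp HdN Hn.
have := Heq _ HCs; have := Htot _ HCs; rewrite /transl EM EN.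
case E1: (tbindo _ n) => [tM|] //= _; case E2: (tbindo _ n) => [tN|] //= [Ef].
have [aM [HaM HuM]] := tbindo_subtree E1 Hu.
have [aN [HaN HuN]] := tbindo_subtree E2 Hu.
exists aM; split => //.
rewrite /qtrans /= in HaN *; rewrite HaN /=.
have HfM : subtree (forget tM) u = Some (forget aM).
  by rewrite /forget subtree_tbind_leafmap ?HuM // => l; exists l.2.
have HfN : subtree (forget tN) u = Some (forget aN).
  by rewrite /forget subtree_tbind_leafmap ?HuN // => l; exists l.2.
by move: HfM; rewrite Ef HfN => -[->].
Qed.
Lemma subtree_leaf_mem F (L : eqType) (n : tree F L) u x :
  subtree n u = Some (Leaf x) -> x \in leaves n.
Proof.
elim: u n => [|i u IH] [l|a ns] //=; first by case=> ->; rewrite mem_seq1.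
case E: (onth ns i) => [m|] // /IH Hm; exact: leaves_onth E Hm.
Qed.

Lemma Rbot (S D : ralph) (M N : dtla S D) (phi : Q N -> P M -> tree D (Q M * P M)) :
  equivalent M N -> Defs.total M -> aheadness M N phi -> is_dtop N ->
  earliest N -> is_dtpla M ->
  forall C pN n u q, context S C -> out_ctx N C pN = Some n ->
  subtree n u = Some (Leaf (q, pN)) ->
  glb (map (fun p => phi q p) (enum (P M))) = Leaf None.
Proof.
move=> Heq Htot Hah HN Hear HM C pN n u q HC Hn Hu.
have [p1 [p2 [_ _ Hp12]]] : exists x y, [/\ x \in P M, y \in P M & x != y].
  by apply/card_gt1P.
have Hin : forall p, List.In (phi q p) (map (fun p => phi q p) (enum (P M))).
  by move=> p; apply: List.in_map; apply: mem_In; rewrite mem_enum.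
have Hlv : forall p x, x \in leaves (phi q p) -> x.2 = p.
  move=> p x Hx; have := Hah C HC p pN; rewrite Hn /= => Ho.
  apply: out_ctx_leaves Ho _.
  exact: (@leaves_tbind_sub _ _ _ (fun x => phi x.1 p) n (q, pN) _ (subtree_leaf_mem Hu) Hx).
move: Hin; case Een: (enum (P M)) => [|e0 es] Hin.
  by move: (Hin p1).
case E: (glb _) => [[x|]|d ch] //;
have E' : glb (phi q e0 :: [seq phi q p | p <- es]) = _ := E;
have Hh := fun p => @glb_hd _ _ (phi q e0) [seq phi q p | p <- es] ltac:(by rewrite E') _ (Hin p); rewrite E' in Hh.
- have Hx : forall p, phi q p = Leaf x.
    move=> p; have := Hh p.
    by case: (phi q p) => [y|??] //= [->].
  have := Hlv p1 x; have := Hlv p2 x; rewrite !Hx !mem_seq1 eqxx => -> // H.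
  by rewrite H ?eqxx in Hp12.
- exfalso; apply: Hear; exists q, d => s Hs t Ht.
  have [aM [HaM Hq]] := keyK Heq Htot Hah HN HC Hn Hu Hs.
  have := Hh (delta M (no_lav M) s).
  move: HaM; case: (phi q _) => [y|d' ts] //= + Ed; subst d'.
  case: (optseq _) => //= ts' [Ea]; move: Ht; rewrite Hq -Ea => -[<-] //.
Qed.
Theorem mainTheorem5 (S D : ralph) (M N : dtla S D)
  (phi : Q N -> P M -> tree D (Q M * P M)) :
  wf_dtla M -> wf_dtla N ->
  canonical M -> canonical N -> equivalent M N ->
  is_dtpla M -> is_dtop N ->
  aheadness M N phi ->
  let psi := fun q : Q N => [ffun p : P M => phi q p] in
  [/\ (forall q, diftup M (psi q)),
      injective psi &
      (forall T, diftup M T -> exists q, psi q = T)].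
Proof.
move=> _ _ [totM _ _ _ _] [_ _ earN reachN distN] Heq HdM HdN Hah psi.
have Rb := Rbot Heq totM Hah HdN earN HdM.
have K := keyK Heq totM Hah HdN.
have /fintype_le1P H1 : #|P N| <= 1 by rewrite HdN.
have [e0 [es Een]] : exists e0 es, enum (P M) = e0 :: es.
  move: HdM; rewrite /is_dtpla cardE; case: (enum (P M)) => [|e0 es] //= _.
  by exists e0, es.
split.
- move=> q; have [C [pN [t [HC [Ht Hq]]]]] := reachN q.
  have [u Hu] := leaves_pos Hq.
  exists C, (fun p => tbind (fun x => phi x.1 p) t), u; split => //.
  + by move=> p; rewrite (Hah C HC p pN) Ht.
  + rewrite /is_bot_node /pref Een glb_tbind -(cats0 u) (subtree_tbind_leaf _ _ Hu).
    by move: (Rb _ _ _ _ _ HC Ht Hu); rewrite Een => <-.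
  + by move=> p; rewrite -(cats0 u) (subtree_tbind_leaf _ _ Hu) /= ffunE.
- move=> q1 q2 E; case: (eqVneq q1 q2) => // /eqP Hne; exfalso.
  apply: (distN _ _ Hne) => s Hs.
  have [C1 [pN1 [t1 [HC1 [Ht1 Hq1]]]]] := reachN q1.
  have [u1 Hu1] := leaves_pos Hq1.
  have [C2 [pN2 [t2 [HC2 [Ht2 Hq2]]]]] := reachN q2.
  have [u2 Hu2] := leaves_pos Hq2.
  have [a1 [Ha1 ->]] := K _ _ _ _ _ HC1 Ht1 Hu1 _ Hs.
  have [a2 [Ha2 ->]] := K _ _ _ _ _ HC2 Ht2 Hu2 _ Hs.
  have Ep : phi q1 (delta M (no_lav M) s) = phi q2 (delta M (no_lav M) s).
    by have := congr1 (fun f : {ffun P M -> tree D (Q M * P M)} => f (delta M (no_lav M) s)) E; rewrite /psi /= !ffunE.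
  by move: Ha1; rewrite Ep Ha2 => -[->].
- move=> T [C [ts [v [HC Hts Hbot HT]]]].
  have [pN _] : exists pN : P N, True.
    move: HdN; rewrite /is_dtop cardE; case: (enum (P N)) => [|x ?] //= _; by exists x.
  have [n Hn] : exists n, out_ctx N C pN = Some n.
    move: (Hts e0); rewrite (Hah C HC e0 pN); case: (out_ctx N C pN) => //= n _; by exists n.
  have Hts' : forall p, ts p = tbind (fun x => phi x.1 p) n.
    by move=> p; move: (Hts p); rewrite (Hah C HC p pN) Hn => -[->].
  move: Hbot; rewrite /is_bot_node /pref (eq_map Hts') Een glb_tbind.
  move=> Hb; have [u [w [[q pN'] [Ev Hu Hw]]]] := subtree_tbind_inv Hb; subst v.
  have EpN : pN' = pN by apply: H1.
  subst pN'.
  have Ew : w = [::] by move: Hw; move: (Rb _ _ _ _ _ HC Hn Hu); rewrite Een => /= ->; case: (w).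
  subst w.
  exists q; apply/ffunP => p; rewrite ffunE.
  move: (HT p); rewrite Hts' cats0 -{1}(cats0 u) (subtree_tbind_leaf _ _ Hu) /= => -[->] //.
Qed.
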